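(* $\lambda<-0.030$, where $$\lambda=\alpha(2)+\sum_{p\ \mathrm{prime}}\alpha(p)-\sum_{j\geq1}\frac1j\left((2\beta_j(2)-1)\prod_{p\geq3\ \mathrm{prime}}\beta_j(p)\right).$$
   Context: For a prime $p$ and an integer $j\geq1$, $\alpha(p)=\left(1-\frac1p\right)\sum_{m\geq1}\frac{1}{p^m}\log\left(1+\frac1p+\cdots+\frac1{p^m}\right)$ and $\beta_j(p)=\left(1-\frac1p\right)\sum_{m\geq0}\frac{1}{p^m}\left(1+\frac1p+\cdots+\frac1{p^m}\right)^{-j}$. (This $\lambda$ is the limit of $\frac1N\sum_{n=1}^N\log\frac{s(2n)}{2n}$, where $s(n)=\sigma(n)-n$ is the sum of the proper divisors of $n$.) *)

(* Defs.v *)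
From Stdlib Require Import Reals ZArith Znumtheory.
From Coquelicot Require Import Coquelicot.
Open Scope R_scope.

Definition geomsum (p : R) (m : nat) : R := sum_f_R0 (fun k => (/ p) ^ k) m.

(* term of index n corresponds to m = n+1 (the sum over m >= 1) *)
Definition alpha_term (p : R) (n : nat) : R :=
  (/ p) ^ (S n) * ln (geomsum p (S n)).
Definition alpha (p : R) : R := (1 - / p) * Series (alpha_term p).

Definition beta_term (j : nat) (p : R) (m : nat) : R :=
  (/ p) ^ m * / (geomsum p m) ^ j.
Definition beta (j : nat) (p : R) : R := (1 - / p) * Series (beta_term j p).

Definition isprime (n : nat) : bool :=
  if prime_dec (Z.of_nat n) then true else false.

(* sum over all primes p of alpha(p), as a series indexed by n : nat *)
Definition alpha_prime_term (n : nat) : R := if isprime n then alpha (INR n) else 0.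

Fixpoint beta_partial_prod (j : nat) (N : nat) : R :=
  match N with
  | O => 1
  | S n => beta_partial_prod j n *
           (if andb (isprime (S n)) (Nat.leb 3 (S n)) then beta j (INR (S n)) else 1)
  end.

Definition beta_prod (j : nat) : R := real (Lim_seq (beta_partial_prod j)).

(* term of index n corresponds to j = n+1 (the sum over j >= 1) *)
Definition lambda_term (n : nat) : R :=
  / INR (S n) * ((2 * beta (S n) 2 - 1) * beta_prod (S n)).

Definition lambda : R := alpha 2 + Series alpha_prime_term - Series lambda_term.

(* Main.v *)
Require Import Defs.
From Stdlib Require Import Reals ZArith Znumtheory.
From Coquelicot Require Import Coquelicot.
From Stdlib Require Import Lra Lia QArith Qreals.
Open Scope R_scope.

Definition PR (u : R) : R :=
  u*(1 - u*(/2 - u*(/3 - u*(/4 - u*(/5 - u*(/6 - u*(/7 - u*(/8 - u*(/9 - u*(/10 - u*/11)))))))))).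

Lemma ln_PR (u : R) : 0 <= u -> ln (1 + u) <= PR u.
Proof.
  intros Hu. destruct (Req_dec u 0) as [->|Hu0].
  { rewrite Rplus_0_r, ln_1. unfold PR. lra. }
  set (f := fun t => PR t - ln (1 + t)).
  assert (Hd : forall t, 0 <= t -> is_derive f t (t ^ 11 / (1 + t))).
  { intros t Ht. unfold f, PR. auto_derive. lra. field. lra. }
  destruct (MVT_gen f 0 u (fun t => t ^ 11 / (1 + t))) as [c [Hc Heq]].
  - intros x Hx. apply Hd. rewrite Rmin_left in Hx by lra. lra.
  - intros x Hx. rewrite Rmin_left in Hx by lra. apply continuity_pt_filterlim.
    apply (ex_derive_continuous (K:=R_AbsRing) (V:=R_NormedModule) f x). eexists. apply Hd. lra.
  - rewrite Rmin_left in Hc by lra. rewrite Rmax_right in Hc by lra.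
    unfold f in Heq. rewrite Rplus_0_r, ln_1 in Heq.
    assert (PR 0 = 0) as H0 by (unfold PR; ring). rewrite H0 in Heq.
    assert (0 <= c ^ 11 / (1 + c)).
    { apply Rdiv_le_0_compat. apply pow_le; lra. lra. }
    nra.
Qed.

Lemma ln_le_xm1 y : 0 < y -> ln y <= y - 1.
Proof. intros Hy. pose proof (exp_ineq1_le (ln y)). rewrite exp_ln in H by lra. lra. Qed.

Lemma Series_zero : Series (fun _ => 0) = 0.
Proof.
  rewrite (Series_ext (fun _ => 0) (fun n => 0 * 0)) by (intros; ring).
  rewrite Series_scal_l. ring.
Qed.

Lemma is_series_geomc c q : Rabs q < 1 -> is_series (fun n => c * q ^ n) (c / (1 - q)).
Proof.
  intros Hq. apply is_series_ext with (fun n => scal c (q ^ n)).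
  { intros n. reflexivity. }
  replace (c / (1 - q)) with (scal c (/ (1 - q))) by reflexivity.
  apply (is_series_scal_l (K:=R_AbsRing) (V:=R_NormedModule)), is_series_geom, Hq.
Qed.

Lemma ex_series_geomc c q : Rabs q < 1 -> ex_series (fun n => c * q ^ n).
Proof. intros Hq. eexists. apply is_series_geomc, Hq. Qed.

Lemma ex_series_nonneg_le (a b : nat -> R) :
  (forall n, 0 <= a n <= b n) -> ex_series b -> ex_series a.
Proof.
  intros H Hb. apply (ex_series_le a b); [|exact Hb].
  intros n. change (norm (a n)) with (Rabs (a n)). rewrite Rabs_pos_eq; apply H.
Qed.

Lemma Series_nonneg (a : nat -> R) : (forall n, 0 <= a n) -> ex_series a -> 0 <= Series a.
Proof.
  intros H Ha. rewrite <- Series_zero. apply Series_le; auto. intros; split; [lra|auto].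
Qed.

Section G.
Variable p : R.
Hypothesis Hp : 2 <= p.

Lemma x_bounds : 0 < / p <= / 2.
Proof. split. apply Rinv_0_lt_compat; lra. apply Rinv_le_contravar; lra. Qed.

Lemma gs_0 : geomsum p 0 = 1.
Proof. unfold geomsum. simpl. ring. Qed.

Lemma gs_S m : geomsum p (S m) = geomsum p m + (/ p) ^ (S m).
Proof. reflexivity. Qed.

Lemma gs_ge1 m : 1 <= geomsum p m.
Proof.
  pose proof x_bounds. induction m. rewrite gs_0; lra.
  rewrite gs_S. pose proof (pow_le (/p) (S m)). lra.
Qed.

Lemma gs_le m : geomsum p m <= / (1 - / p).
Proof.
  pose proof x_bounds. unfold geomsum. rewrite tech3 by lra.
  unfold Rdiv. rewrite Rmult_comm. rewrite <- (Rmult_1_r (/ (1 - /p))) at 2.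
  apply Rmult_le_compat_l. apply Rlt_le, Rinv_0_lt_compat; lra.
  pose proof (pow_lt (/p) (S m)). lra.
Qed.

Lemma gs_ge_1x m : (1 <= m)%nat -> 1 + / p <= geomsum p m.
Proof.
  pose proof x_bounds. intros Hm. induction Hm.
  rewrite gs_S, gs_0. simpl. lra.
  rewrite gs_S. pose proof (pow_le (/p) (S m)). lra.
Qed.

Lemma alpha_term_nonneg n : 0 <= alpha_term p n.
Proof.
  pose proof x_bounds. unfold alpha_term. apply Rmult_le_pos. apply pow_le; lra.
  rewrite <- ln_1. apply ln_le. lra. apply gs_ge1.
Qed.

Lemma ln_gs_le m : ln (geomsum p m) <= / p / (1 - / p).
Proof.
  pose proof x_bounds. pose proof (gs_ge1 m). pose proof (gs_le m).
  eapply Rle_trans. apply ln_le_xm1. lra.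
  replace (/ p / (1 - / p)) with (/ (1 - /p) - 1) by (field; lra). lra.
Qed.

Lemma alpha_term_le n : alpha_term p n <= (/ p / (1 - / p) * / p) * (/ p) ^ n.
Proof.
  pose proof x_bounds. unfold alpha_term. simpl pow.
  replace (/ p / (1 - / p) * / p * (/ p) ^ n) with (/ p * (/ p) ^ n * (/ p / (1 - / p))) by ring.
  apply Rmult_le_compat_l. apply Rmult_le_pos; [lra|apply pow_le; lra].
  apply ln_gs_le.
Qed.

Lemma Rabs_x : Rabs (/ p) < 1.
Proof. pose proof x_bounds. rewrite Rabs_pos_eq; lra. Qed.

Lemma ex_alpha : ex_series (alpha_term p).
Proof.
  apply (ex_series_nonneg_le _ (fun n => (/ p / (1 - / p) * / p) * (/ p) ^ n)).
  intros n; split; [apply alpha_term_nonneg|apply alpha_term_le].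
  apply ex_series_geomc, Rabs_x.
Qed.

Lemma alpha_nonneg : 0 <= alpha p.
Proof.
  pose proof x_bounds. unfold alpha. apply Rmult_le_pos. lra.
  apply Series_nonneg. apply alpha_term_nonneg. apply ex_alpha.
Qed.

Lemma alpha_le_crude : alpha p <= / p * / p / (1 - / p).
Proof.
  pose proof x_bounds. unfold alpha.
  assert (Series (alpha_term p) <= (/ p / (1 - / p) * / p) / (1 - / p)).
  { rewrite <- (is_series_unique _ _ (is_series_geomc (/ p / (1 - / p) * / p) (/ p) Rabs_x)).
    apply Series_le. intros n; split; [apply alpha_term_nonneg|apply alpha_term_le].
    apply ex_series_geomc, Rabs_x. }
  apply Rmult_le_compat_l with (r := 1 - / p) in H0; [|lra].
  eapply Rle_trans. apply H0. right. field. lra.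
Qed.

Lemma alpha_ub (M : nat) (L : nat -> R) :
  (forall m, (1 <= m <= S M)%nat -> ln (geomsum p m) <= L m) ->
  alpha p <= (1 - / p) * (sum_f_R0 (fun k => (/ p) ^ (S k) * L (S k)) M
                          + ((/ p / (1 - / p) * / p) * (/ p) ^ (S M)) / (1 - / p)).
Proof.
  intros HL. pose proof x_bounds. unfold alpha.
  apply Rmult_le_compat_l. lra.
  rewrite (Series_incr_n _ (S M)) by (lia || apply ex_alpha). simpl pred.
  apply Rplus_le_compat.
  - apply sum_Rle. intros n Hn. unfold alpha_term.
    apply Rmult_le_compat_l. apply pow_le; lra. apply HL. lia.
  - rewrite <- (is_series_unique _ _ (is_series_geomc ((/ p / (1 - / p) * / p) * (/ p) ^ (S M)) (/ p) Rabs_x)).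
    apply Series_le.
    + intros n; split. apply alpha_term_nonneg. eapply Rle_trans. apply alpha_term_le.
      rewrite pow_add. right; ring.
    + apply ex_series_geomc, Rabs_x.
Qed.

Lemma ln_step m L : ln (geomsum p m) <= L ->
  ln (geomsum p (S m)) <= L + PR ((/ p) ^ (S m) * / geomsum p m).
Proof.
  intros H. pose proof x_bounds. pose proof (gs_ge1 m). pose proof (pow_lt (/p) (S m)).
  rewrite gs_S.
  replace (geomsum p m + (/ p) ^ S m) with (geomsum p m * (1 + (/ p) ^ (S m) * / geomsum p m)) by (field; lra).
  rewrite ln_mult by (try lra; assert (0 < (/ p) ^ (S m) * / geomsum p m) by (apply Rmult_lt_0_compat; [lra| apply Rinv_0_lt_compat; lra]); lra).
  apply Rplus_le_compat. exact H. apply ln_PR.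
  apply Rmult_le_pos. lra. apply Rlt_le, Rinv_0_lt_compat; lra.
Qed.

Lemma beta_term_nonneg j m : 0 <= beta_term j p m.
Proof.
  pose proof x_bounds. unfold beta_term. apply Rmult_le_pos. apply pow_le; lra.
  apply Rlt_le, Rinv_0_lt_compat, pow_lt. pose proof (gs_ge1 m). lra.
Qed.

Lemma beta_term_le j m : beta_term j p m <= 1 * (/ p) ^ m.
Proof.
  pose proof x_bounds. unfold beta_term. rewrite Rmult_1_l.
  assert (/ geomsum p m ^ j <= 1).
  { pose proof (gs_ge1 m). assert (1 <= geomsum p m ^ j) by (rewrite <- (pow1 j); apply pow_incr; lra).
    rewrite <- Rinv_1. apply Rinv_le_contravar; lra. }
  pose proof (pow_le (/p) m). pose proof (gs_ge1 m).
  assert (0 <= / geomsum p m ^ j) by (apply Rlt_le, Rinv_0_lt_compat, pow_lt; lra).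
  nra.
Qed.

Lemma ex_beta j : ex_series (beta_term j p).
Proof.
  apply (ex_series_nonneg_le _ (fun n => 1 * (/ p) ^ n)).
  intros n; split; [apply beta_term_nonneg|apply beta_term_le].
  apply ex_series_geomc, Rabs_x.
Qed.

Lemma beta_nonneg j : 0 <= beta j p.
Proof.
  pose proof x_bounds. unfold beta. apply Rmult_le_pos. lra.
  apply Series_nonneg. apply beta_term_nonneg. apply ex_beta.
Qed.

Lemma beta_le1 j : beta j p <= 1.
Proof.
  pose proof x_bounds. unfold beta.
  assert (Series (beta_term j p) <= 1 / (1 - / p)).
  { rewrite <- (is_series_unique _ _ (is_series_geomc 1 (/ p) Rabs_x)).
    apply Series_le. intros n; split; [apply beta_term_nonneg|apply beta_term_le].
    apply ex_series_geomc, Rabs_x. }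
  apply Rmult_le_compat_l with (r := 1 - / p) in H0; [|lra].
  eapply Rle_trans. apply H0. right. field. lra.
Qed.

Lemma inv_gs_pow_ge j m : (1 - / p) ^ j <= / (geomsum p m) ^ j.
Proof.
  pose proof x_bounds. pose proof (gs_ge1 m). pose proof (gs_le m).
  rewrite <- pow_inv. apply pow_incr. split. lra.
  replace (1 - / p) with (/ / (1 - / p)) by (field; lra).
  apply Rinv_le_contravar. lra. exact H1.
Qed.

Lemma beta_lb j M :
  (1 - / p) * sum_f_R0 (beta_term j p) M + (/ p) ^ (S M) * (1 - / p) ^ j <= beta j p.
Proof.
  pose proof x_bounds. unfold beta.
  rewrite (Series_incr_n _ (S M)) by (lia || apply ex_beta). simpl pred.
  rewrite Rmult_plus_distr_l. apply Rplus_le_compat_l.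
  assert (((/ p) ^ (S M) * (1 - / p) ^ j) / (1 - / p) <= Series (fun k => beta_term j p (S M + k))).
  { rewrite <- (is_series_unique _ _ (is_series_geomc ((/ p) ^ (S M) * (1 - / p) ^ j) (/ p) Rabs_x)).
    apply Series_le.
    - intros n; split. apply Rmult_le_pos. apply Rmult_le_pos; apply pow_le; lra. apply pow_le; lra.
      unfold beta_term. rewrite pow_add.
      replace ((/ p) ^ S M * (1 - / p) ^ j * (/ p) ^ n) with ((/ p) ^ S M * (/ p) ^ n * (1 - / p) ^ j) by ring.
      apply Rmult_le_compat_l. apply Rmult_le_pos; apply pow_le; lra. apply inv_gs_pow_ge.
    - apply (ex_series_incr_n (beta_term j p) (S M)). apply ex_beta. }
  apply Rmult_le_compat_l with (r := 1 - / p) in H0; [|lra].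
  eapply Rle_trans; [|apply H0]. right. field. lra.
Qed.

Lemma bernoulli j : (1 - INR j * / p) <= (1 - / p) ^ j.
Proof.
  pose proof x_bounds. induction j. simpl. lra.
  rewrite S_INR. simpl pow.
  assert (0 <= INR j) by apply pos_INR.
  assert (0 <= (1 - / p) ^ j) by (apply pow_le; lra).
  nra.
Qed.

Lemma beta_ge_1mj j : 1 - INR j * (/ p * / p) <= beta j p.
Proof.
  pose proof x_bounds. eapply Rle_trans; [|apply (beta_lb j 0)].
  simpl sum_f_R0. unfold beta_term. rewrite gs_0, pow1. simpl pow.
  pose proof (bernoulli j). nra.
Qed.
End G.
Arguments x_bounds : clear implicits.

Lemma twobeta j : 0 <= 2 * beta j 2 - 1 <= (2/3) ^ j.
Proof.
  assert (H2 : 2 <= 2) by lra. pose proof (x_bounds 2 H2).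
  unfold beta. rewrite (Series_incr_1 _ (ex_beta 2 H2 j)).
  assert (Hb0 : beta_term j 2 0 = 1) by (unfold beta_term; rewrite (gs_0 2), pow1; simpl; field).
  rewrite Hb0.
  replace (2 * ((1 - / 2) * (1 + Series (fun k => beta_term j 2 (S k)))) - 1)
    with (Series (fun k => beta_term j 2 (S k))) by (field).
  assert (Hex : ex_series (fun k => beta_term j 2 (S k))).
  { apply (ex_series_incr_n (beta_term j 2) 1). apply ex_beta; lra. }
  split.
  - apply Series_nonneg; [|exact Hex]. intros; apply beta_term_nonneg; lra.
  - replace ((2/3)^j) with (((2/3)^j * / 2) / (1 - / 2)) by (field).
    rewrite <- (is_series_unique _ _ (is_series_geomc ((2/3)^j * / 2) (/ 2) (Rabs_x 2 H2))).
    apply Series_le; [|apply ex_series_geomc, Rabs_x; lra].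
    intros n; split. apply beta_term_nonneg; lra.
    unfold beta_term. simpl pow.
    replace ((2/3)^j * / 2 * (/2)^n) with (/ 2 * (/2)^n * (2/3)^j) by ring.
    apply Rmult_le_compat_l. apply Rmult_le_pos. lra. apply pow_le; lra.
    rewrite <- pow_inv. apply pow_incr.
    pose proof (gs_ge_1x 2 H2 (S n) ltac:(lia)). split.
    apply Rlt_le, Rinv_0_lt_compat; lra.
    replace (2/3) with (/ (3/2)) by field. apply Rinv_le_contravar; lra.
Qed.

Definition bfac (j n : nat) : R :=
  if andb (isprime (S n)) (Nat.leb 3 (S n)) then beta j (INR (S n)) else 1.

Lemma bpp_S j n : beta_partial_prod j (S n) = beta_partial_prod j n * bfac j n.
Proof. reflexivity. Qed.

Lemma cond_ge2 n : andb (isprime (S n)) (Nat.leb 3 (S n)) = true -> 2 <= INR (S n).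
Proof.
  intros H. apply andb_prop in H. destruct H as [_ H]. apply Nat.leb_le in H.
  apply le_INR in H. assert (INR 3 = 3) by (simpl; ring). lra.
Qed.

Lemma bfac_01 j n : 0 <= bfac j n <= 1.
Proof.
  unfold bfac. destruct (andb _ _) eqn:E. 2: lra.
  pose proof (cond_ge2 n E). split. apply beta_nonneg; lra. apply beta_le1; lra.
Qed.

Lemma bfac_ge j n : 1 - INR j * (/ INR (S n) * / INR (S n)) <= bfac j n.
Proof.
  unfold bfac. destruct (andb _ _) eqn:E.
  - apply beta_ge_1mj. apply cond_ge2; auto.
  - assert (0 <= INR j) by apply pos_INR.
    assert (0 <= / INR (S n) * / INR (S n)) by (apply Rmult_le_pos; apply Rlt_le, Rinv_0_lt_compat, lt_0_INR; lia).
    nra.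
Qed.

Lemma bpp_01 j n : 0 <= beta_partial_prod j n <= 1.
Proof.
  induction n. simpl. lra. rewrite bpp_S. pose proof (bfac_01 j n). nra.
Qed.

Lemma bpp_decr j n : beta_partial_prod j (S n) <= beta_partial_prod j n.
Proof. rewrite bpp_S. pose proof (bfac_01 j n). pose proof (bpp_01 j n). nra. Qed.

Lemma bpp_ex j : ex_finite_lim_seq (beta_partial_prod j).
Proof. apply (ex_finite_lim_seq_decr _ 0). apply bpp_decr. intros n; apply bpp_01. Qed.

Lemma beta_prod_lim j : is_lim_seq (beta_partial_prod j) (beta_prod j).
Proof.
  destruct (bpp_ex j) as [l Hl]. unfold beta_prod.
  rewrite (is_lim_seq_unique _ _ Hl). simpl. exact Hl.
Qed.

Lemma beta_prod_01 j : 0 <= beta_prod j <= 1.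
Proof.
  pose proof (beta_prod_lim j). split.
  - pose proof (is_lim_seq_le (fun _ => 0) _ 0 (beta_prod j) (fun n => proj1 (bpp_01 j n)) (is_lim_seq_const 0) H). simpl in H0. exact H0.
  - pose proof (is_lim_seq_le _ (fun _ => 1) (beta_prod j) 1 (fun n => proj2 (bpp_01 j n)) H (is_lim_seq_const 1)). simpl in H0. exact H0.
Qed.

Lemma bpp_tail j N : (2 <= N)%nat -> INR j <= INR N -> forall k,
  beta_partial_prod j N * (1 - INR j * (/ INR N - / INR (N + k))) <= beta_partial_prod j (N + k).
Proof.
  intros HN HjN k. induction k.
  - rewrite Nat.add_0_r. right. ring.
  - rewrite Nat.add_succ_r, bpp_S.
    pose proof (bpp_01 j N). pose proof (bpp_01 j (N + k)).
    set (A := beta_partial_prod j N) in *. set (B := beta_partial_prod j (N + k)) in *.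
    pose proof (bfac_ge j (N + k)). pose proof (bfac_01 j (N + k)).
    set (f := bfac j (N + k)) in *.
    assert (HN' : 2 <= INR N) by (apply le_INR in HN; simpl in HN; lra).
    assert (Hm : INR N <= INR (N + k)) by (apply le_INR; lia).
    rewrite S_INR in *.
    set (m := INR (N + k)) in *.
    set (a := / m) in *. set (b := / (m + 1)) in *.
    assert (Hb2 : b * b <= a - b).
    { assert (E : a - b - b * b = / (m * (m + 1) * (m + 1))) by (unfold a, b; field; lra).
      assert (0 < / (m * (m + 1) * (m + 1))) by (apply Rinv_0_lt_compat; apply Rmult_lt_0_compat; [apply Rmult_lt_0_compat|]; lra).
      lra. }
    assert (Hab : 0 <= b) by (unfold b; apply Rlt_le, Rinv_0_lt_compat; lra).
    assert (Hja : INR j * (/ INR N - a) <= 1).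
    { assert (0 < a) by (unfold a; apply Rinv_0_lt_compat; lra).
      assert (/ INR N <= 1) by (rewrite <- Rinv_1; apply Rinv_le_contravar; lra).
      assert (INR j * / INR N <= 1).
      { replace 1 with (INR N * / INR N) by (field; lra). apply Rmult_le_compat_r. apply Rlt_le, Rinv_0_lt_compat; lra. exact HjN. }
      assert (0 <= INR j) by apply pos_INR. nra. }
    assert (Ht0 : 0 <= 1 - INR j * (/ INR N - a)) by lra.
    assert (0 <= INR j) by apply pos_INR.
    apply Rle_trans with (A * (1 - INR j * (/ INR N - a)) * f).
    2: apply Rmult_le_compat_r; lra.
    apply Rle_trans with (A * (1 - INR j * (/ INR N - a)) * (1 - INR j * (b * b))).
    2: { apply Rmult_le_compat_l. apply Rmult_le_pos. lra. lra. exact H1. }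
    rewrite Rmult_assoc. apply Rmult_le_compat_l. lra.
    assert (0 <= INR j * (b*b)) by (apply Rmult_le_pos; nra).
    assert (INR j * (b * b) <= INR j * (a - b)) by (apply Rmult_le_compat_l; lra).
    assert (0 <= (INR j * (/ INR N - a)) * (INR j * (b * b))).
    { apply Rmult_le_pos; [|lra]. assert (a <= / INR N) by (unfold a; apply Rinv_le_contravar; lra).
      apply Rmult_le_pos; lra. }
    replace (INR j * (/ INR N - b)) with (INR j * (/ INR N - a) + INR j * (a - b)) by ring.
    nra.
Qed.

Lemma beta_prod_ge j N : (2 <= N)%nat -> INR j <= INR N ->
  beta_partial_prod j N * (1 - INR j * / INR N) <= beta_prod j.
Proof.
  intros HN HjN.
  pose proof (is_lim_seq_le_loc (fun _ => beta_partial_prod j N * (1 - INR j * / INR N))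
     (beta_partial_prod j) (beta_partial_prod j N * (1 - INR j * / INR N)) (beta_prod j)) as H.
  simpl in H. apply H; [|apply is_lim_seq_const|apply beta_prod_lim].
  exists N. intros n Hn. replace n with (N + (n - N))%nat by lia.
  eapply Rle_trans; [|apply bpp_tail; auto].
  pose proof (bpp_01 j N).
  apply Rmult_le_compat_l. lra.
  assert (0 < INR (N + (n - N))) by (apply lt_0_INR; lia).
  assert (0 <= INR j) by apply pos_INR.
  assert (0 < / INR (N + (n-N))) by (apply Rinv_0_lt_compat; lra). nra.
Qed.

Lemma sf0 f : sum_f_R0 f 0 = f 0%nat. Proof. reflexivity. Qed.
Lemma sfS f n : sum_f_R0 f (S n) = sum_f_R0 f n + f (S n). Proof. reflexivity. Qed.

Lemma tele_series N : (1 <= N)%nat ->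
  is_series (fun k => / (INR (S N + k) * INR (N + k))) (/ INR N).
Proof.
  intros HN.
  assert (Hs : forall n, @eq R (sum_n (fun k => / (INR (S N + k) * INR (N + k))) n) (/ INR N - / INR (S N + n))).
  { intros n. rewrite sum_n_Reals. induction n.
    - rewrite sf0. cbv beta. rewrite !Nat.add_0_r. rewrite S_INR.
      assert (0 < INR N) by (apply lt_0_INR; lia). field. lra.
    - rewrite sfS, IHn. cbv beta.
      replace (S N + S n)%nat with (S (S N + n)) by lia.
      replace (N + S n)%nat with (S N + n)%nat by lia.
      rewrite (S_INR (S N + n)).
      assert (0 < INR (S N + n)) by (apply lt_0_INR; lia). assert (0 < INR N) by (apply lt_0_INR; lia). field. repeat split; lra. }
  assert (Hl : is_lim_seq (fun n => / INR N - / INR (S N + n)) (/ INR N)).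
  { assert (H0 : is_lim_seq (fun n => / INR (S N + n)) 0).
    2: { pose proof (is_lim_seq_minus' _ _ _ _ (is_lim_seq_const (/ INR N)) H0) as H1.
         rewrite Rminus_0_r in H1. exact H1. }
    assert (H := is_lim_seq_inv _ _ (proj1 (is_lim_seq_incr_n INR (S N) p_infty) is_lim_seq_INR)).
    simpl in H. apply is_lim_seq_ext with (fun n => / INR (n + S N)).
    intros n; rewrite Nat.add_comm; reflexivity. apply H. discriminate. }
  unfold is_series. apply (is_lim_seq_ext _ _ _ (fun n => eq_sym (Hs n))) in Hl. exact Hl.
Qed.

Open Scope Q_scope.
Definition Dp : positive := Eval vm_compute in Pos.pow 2 80.
Definition rdown (q:Q) : Q := Qmake (Z.div (Qnum q * Zpos Dp) (Zpos (Qden q))) Dp.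
Definition rup (q:Q) : Q := Qopp (rdown (Qopp q)).
Fixpoint Qpw (q:Q) (k:nat) : Q := match k with O => 1 | S k => q * Qpw q k end.
Definition pQ (n:nat) : Q := inject_Z (Z.of_nat n).
Definition xQ (n:nat) : Q := Qinv (pQ n).
Fixpoint gQ (n m : nat) : Q := match m with O => 1 | S m' => Qred (gQ n m' + Qpw (xQ n) (S m')) end.
Definition PQ (u:Q) : Q :=
  u*(1 - u*((1#2) - u*((1#3) - u*((1#4) - u*((1#5) - u*((1#6) - u*((1#7) - u*((1#8) - u*((1#9) - u*((1#10) - u*(1#11))))))))))).
Fixpoint ALq (n m : nat) : Q * Q * Q := match m with
  | O => (1, 0, 0)
  | S m' => let '(g, L, s) := ALq n m' in
            let L' := rup (L + PQ (Qpw (xQ n) (S m') * Qinv g)) in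
            (Qred (g + Qpw (xQ n) (S m')), L', rup (s + Qpw (xQ n) (S m') * L'))
  end.
Definition SAq (n m : nat) : Q := snd (ALq n m).
Definition aUB (n M : nat) : Q :=
  rup ((1 - xQ n) * (SAq n (S M) + ((xQ n / (1 - xQ n) * xQ n) * Qpw (xQ n) (S M)) / (1 - xQ n))).
Definition btQ (n j m : nat) : Q := Qpw (xQ n) m * Qpw (Qinv (gQ n m)) j.
Fixpoint BSq (n j m : nat) : Q := match m with O => rdown (btQ n j 0) | S m' => rdown (BSq n j m' + btQ n j (S m')) end.
Definition bLB (n j M : nat) : Q := rdown ((1 - xQ n) * BSq n j M + Qpw (xQ n) (S M) * Qpw (1 - xQ n) j).
Definition clamp01 (q:Q) : Q := if Qle_bool q 0 then 0 else if Qle_bool 1 q then 1 else q.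
Definition qmax0 (q:Q) : Q := if Qle_bool 0 q then q else 0.
Definition Mf (n:nat) : nat := if Nat.eqb n 2 then 30 else if Nat.ltb n 10 then 16 else if Nat.ltb n 100 then 8 else 4.
Fixpoint td (z d : Z) (fuel : nat) : bool :=
  match fuel with O => true | S f => if Z.ltb z (d*d) then true else if Z.eqb (Z.modulo z d) 0 then false else td z (d+1) f end.
Definition test (n:nat) : bool := andb (Z.ltb 1 (Z.of_nat n)) (td (Z.of_nat n) 2 n).
Fixpoint PBq (j n : nat) : Q := match n with O => 1 | S n' =>
  rdown (PBq j n' * (if andb (test (S n')) (Nat.leb 3 (S n')) then clamp01 (bLB (S n') j (Mf (S n'))) else 1)) end.
Fixpoint SPq (n : nat) : Q := match n with O => 0 | S n' =>
  rup (SPq n' + (if test (S n') then qmax0 (aUB (S n') (Mf (S n'))) else 0)) end.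
Definition lamQ (j N : nat) : Q :=
  rdown (Qinv (pQ j) * (2 * bLB 2 j 30 - 1) * qmax0 (PBq j N * (1 - pQ j / pQ N))).
Fixpoint LSq (J N : nat) : Q := match J with O => 0 | S J' => rdown (LSq J' N + lamQ (S J') N) end.
Definition final (N J : nat) : Q := aUB 2 30 + SPq N + Qinv (pQ N) - LSq J N.

Close Scope Q_scope.
Open Scope R_scope.

Lemma rdown_le q : Q2R (rdown q) <= Q2R q.
Proof.
  apply Qle_Rle. unfold rdown, Qle. simpl.
  destruct q as [n d]. simpl.
  rewrite Z.mul_comm. apply Z.mul_div_le. lia.
Qed.

Lemma rup_ge q : Q2R q <= Q2R (rup q).
Proof.
  unfold rup. rewrite Q2R_opp. pose proof (rdown_le (- q)). rewrite Q2R_opp in H. lra.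
Qed.

Lemma Q2R_1' : Q2R 1 = 1. Proof. unfold Q2R. simpl. field. Qed.
Lemma Q2R_0' : Q2R 0 = 0. Proof. unfold Q2R. simpl. field. Qed.

Lemma Q2R_pw q k : Q2R (Qpw q k) = (Q2R q) ^ k.
Proof. induction k; simpl. apply Q2R_1'. rewrite Q2R_mult, IHk. reflexivity. Qed.

Lemma Q2R_pQ n : Q2R (pQ n) = INR n.
Proof. unfold pQ, Q2R, inject_Z. simpl. rewrite INR_IZR_INZ. field. Qed.

Lemma Q2R_inv' q : Q2R q <> 0 -> Q2R (/ q) = / Q2R q.
Proof.
  intros H. apply Q2R_inv. intros E. apply H. rewrite (Qeq_eqR _ _ E). apply Q2R_0'.
Qed.

Lemma Q2R_div' a b : Q2R b <> 0 -> Q2R (a / b) = Q2R a / Q2R b.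
Proof. intros H. unfold Qdiv. rewrite Q2R_mult, Q2R_inv' by auto. reflexivity. Qed.

Lemma Q2R_xQ n : (1 <= n)%nat -> Q2R (xQ n) = / INR n.
Proof.
  intros Hn. unfold xQ. rewrite Q2R_inv', Q2R_pQ. reflexivity.
  rewrite Q2R_pQ. apply not_0_INR. lia.
Qed.

Lemma Q2R_red q : Q2R (Qred q) = Q2R q.
Proof. apply Qeq_eqR, Qred_correct. Qed.

Lemma Q2R_PQ u : Q2R (PQ u) = PR (Q2R u).
Proof.
  unfold PQ, PR. repeat (rewrite Q2R_mult || rewrite Q2R_minus).
  generalize (Q2R u). intros r. unfold Q2R. simpl. field.
Qed.

Lemma INR_ge2 n : (2 <= n)%nat -> 2 <= INR n.
Proof. intros H. apply le_INR in H. simpl in H. lra. Qed.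

Section P.
Variable n : nat.
Hypothesis Hn : (2 <= n)%nat.
Let p := INR n.
Let Hp : 2 <= p := INR_ge2 n Hn.

Lemma xQ_ok : Q2R (xQ n) = / p.
Proof. apply Q2R_xQ. lia. Qed.

Lemma gQ_ok m : Q2R (gQ n m) = geomsum p m.
Proof.
  induction m. simpl. rewrite Q2R_1', gs_0. reflexivity.
  change (gQ n (S m)) with (Qred (gQ n m + Qpw (xQ n) (S m))). rewrite Q2R_red, Q2R_plus, IHm, Q2R_pw, xQ_ok. reflexivity.
Qed.

Lemma AL_ok m : Q2R (fst (fst (ALq n m))) = geomsum p m /\
   ln (geomsum p m) <= Q2R (snd (fst (ALq n m))).
Proof.
  induction m.
  - simpl. rewrite Q2R_1', Q2R_0', gs_0. rewrite ln_1. lra.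
  - cbn [ALq]. destruct (ALq n m) as [[g L] s]. cbn [fst snd] in *. destruct IHm as [Hg HL].
    split.
    + rewrite Q2R_red, Q2R_plus, Hg, Q2R_pw, xQ_ok. reflexivity.
    + eapply Rle_trans. apply (ln_step p Hp m _ HL).
      eapply Rle_trans; [|apply rup_ge]. rewrite Q2R_plus, Q2R_PQ, Q2R_mult, Q2R_pw, xQ_ok.
      rewrite Q2R_inv', Hg. lra. rewrite Hg. pose proof (gs_ge1 p Hp m). lra.
Qed.

Definition Lf (m : nat) : R := Q2R (snd (fst (ALq n m))).

Lemma SA_ok M : sum_f_R0 (fun k => (/ p) ^ (S k) * Lf (S k)) M <= Q2R (SAq n (S M)).
Proof.
  assert (E : forall m, Q2R (SAq n (S m)) >= Q2R (SAq n m) + (/ p) ^ (S m) * Lf (S m)).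
  { intros m. unfold SAq, Lf. cbn [ALq]. destruct (ALq n m) as [[g L] s]. cbn [fst snd].
    apply Rle_ge. eapply Rle_trans; [|apply rup_ge]. rewrite Q2R_plus, Q2R_mult, Q2R_pw, xQ_ok. lra. }
  induction M.
  - rewrite sf0. pose proof (E 0%nat). change (SAq n 0) with 0%Q in H. rewrite Q2R_0' in H. cbv beta. lra.
  - rewrite sfS. pose proof (E (S M)). cbv beta. lra.
Qed.

Lemma aUB_ok M : alpha p <= Q2R (aUB n M).
Proof.
  pose proof (x_bounds p Hp).
  eapply Rle_trans. apply (alpha_ub p Hp M Lf).
  { intros m _. unfold Lf. apply AL_ok. }
  eapply Rle_trans; [|apply rup_ge].
  assert (Q2R (1 - xQ n) = 1 - / p) by (rewrite Q2R_minus, Q2R_1', xQ_ok; reflexivity).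
  assert (Hne : Q2R (1 - xQ n) <> 0) by (rewrite H0; lra).
  rewrite Q2R_mult, H0, Q2R_plus.
  repeat ((rewrite Q2R_div' by exact Hne) || rewrite Q2R_mult).
  rewrite Q2R_pw, !xQ_ok, H0.
  apply Rmult_le_compat_l. lra. pose proof (SA_ok M). lra.
Qed.

Lemma btQ_ok j m : Q2R (btQ n j m) = beta_term j p m.
Proof.
  unfold btQ, beta_term. rewrite Q2R_mult, !Q2R_pw, Q2R_inv', gQ_ok, xQ_ok, (pow_inv (geomsum p m)). reflexivity.
  rewrite gQ_ok. pose proof (gs_ge1 p Hp m). lra.
Qed.

Lemma BS_ok j M : Q2R (BSq n j M) <= sum_f_R0 (beta_term j p) M.
Proof.
  induction M.
  - simpl BSq. rewrite sf0. eapply Rle_trans. apply rdown_le. rewrite btQ_ok. lra.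
  - simpl BSq. rewrite sfS. eapply Rle_trans. apply rdown_le. rewrite Q2R_plus, btQ_ok. lra.
Qed.

Lemma bLB_ok j M : Q2R (bLB n j M) <= beta j p.
Proof.
  pose proof (x_bounds p Hp).
  eapply Rle_trans. apply rdown_le. eapply Rle_trans; [|apply (beta_lb p Hp j M)].
  assert (Q2R (1 - xQ n) = 1 - / p) by (rewrite Q2R_minus, Q2R_1', xQ_ok; reflexivity).
  rewrite Q2R_plus, !Q2R_mult, H0, !Q2R_pw, H0, xQ_ok.
  pose proof (BS_ok j M). apply Rplus_le_compat_r. apply Rmult_le_compat_l; lra.
Qed.
End P.

Lemma td_ok z : prime z -> forall fuel d, (2 <= d)%Z -> td z d fuel = true.
Proof.
  intros Hz fuel. induction fuel; intros d Hd; simpl. reflexivity.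
  destruct (Z.ltb z (d * d)) eqn:E1. reflexivity.
  destruct (Z.eqb (z mod d) 0) eqn:E2.
  - exfalso. apply Z.ltb_ge in E1. apply Z.eqb_eq in E2.
    apply Z.mod_divide in E2; [|lia].
    pose proof (prime_ge_2 z Hz).
    destruct (prime_divisors z Hz d E2) as [Hd1|[Hd1|[Hd1|Hd1]]]; subst; nia.
  - apply IHfuel. lia.
Qed.

Lemma isprime_prime n : isprime n = true -> prime (Z.of_nat n).
Proof. unfold isprime. destruct (prime_dec (Z.of_nat n)); auto; discriminate. Qed.

Lemma isprime_ge2 n : isprime n = true -> (2 <= n)%nat.
Proof. intros H. apply isprime_prime, prime_ge_2 in H. lia. Qed.

Lemma test_sound n : isprime n = true -> test n = true.
Proof.
  intros H. apply isprime_prime in H. unfold test.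
  pose proof (prime_ge_2 _ H). apply andb_true_intro. split.
  apply Z.ltb_lt. lia. apply td_ok; auto. lia.
Qed.

Lemma clamp_ok q b : 0 <= b <= 1 -> Q2R q <= b ->
  0 <= Q2R (clamp01 q) <= 1 /\ Q2R (clamp01 q) <= b.
Proof.
  intros Hb Hq. unfold clamp01.
  destruct (Qle_bool q 0) eqn:E1. rewrite Q2R_0'. lra.
  destruct (Qle_bool 1 q) eqn:E2. rewrite Q2R_1'.
  - apply Qle_bool_iff, Qle_Rle in E2. rewrite Q2R_1' in E2. lra.
  - assert (~ (q <= 0)%Q) by (intro H; apply Qle_bool_iff in H; congruence).
    assert (~ (1 <= q)%Q) by (intro H'; apply Qle_bool_iff in H'; congruence).
    apply Qnot_le_lt, Qlt_Rlt in H. apply Qnot_le_lt, Qlt_Rlt in H0.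
    rewrite Q2R_0' in H. rewrite Q2R_1' in H0. lra.
Qed.

Lemma clamp_01 q : 0 <= Q2R (clamp01 q) <= 1.
Proof.
  unfold clamp01.
  destruct (Qle_bool q 0) eqn:E1. rewrite Q2R_0'. lra.
  destruct (Qle_bool 1 q) eqn:E2. rewrite Q2R_1'. lra.
  assert (~ (q <= 0)%Q) by (intro H; apply Qle_bool_iff in H; congruence).
  assert (~ (1 <= q)%Q) by (intro H'; apply Qle_bool_iff in H'; congruence).
  apply Qnot_le_lt, Qlt_Rlt in H. apply Qnot_le_lt, Qlt_Rlt in H0.
  rewrite Q2R_0' in H. rewrite Q2R_1' in H0. lra.
Qed.

Lemma qmax0_ok q : 0 <= Q2R (qmax0 q) /\ Q2R q <= Q2R (qmax0 q).
Proof.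
  unfold qmax0. destruct (Qle_bool 0 q) eqn:E.
  - apply Qle_bool_iff, Qle_Rle in E. rewrite Q2R_0' in E. lra.
  - rewrite Q2R_0'. assert (~ (0 <= q)%Q) by (intro H; apply Qle_bool_iff in H; congruence).
    apply Qnot_le_lt, Qlt_Rlt in H. rewrite Q2R_0' in H. lra.
Qed.

Lemma qmax0_le q b : 0 <= b -> Q2R q <= b -> Q2R (qmax0 q) <= b.
Proof.
  intros. unfold qmax0. destruct (Qle_bool 0 q). auto. rewrite Q2R_0'. auto.
Qed.

Definition cfac (j n : nat) : Q :=
  if andb (test (S n)) (Nat.leb 3 (S n)) then clamp01 (bLB (S n) j (Mf (S n))) else 1.

Lemma PBq_S j n : PBq j (S n) = rdown (PBq j n * cfac j n).
Proof. reflexivity. Qed.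

Lemma cfac_ok j n : 0 <= Q2R (cfac j n) <= bfac j n.
Proof.
  unfold cfac, bfac.
  destruct (isprime (S n)) eqn:Ei.
  - rewrite (test_sound _ Ei).
    destruct (Nat.leb 3 (S n)) eqn:El; cbn [andb].
    + apply Nat.leb_le in El.
      assert (H2 : (2 <= S n)%nat) by lia.
      pose proof (INR_ge2 _ H2).
      destruct (clamp_ok (bLB (S n) j (Mf (S n))) (beta j (INR (S n)))) as [[A B] C].
      split; [apply beta_nonneg; lra | apply beta_le1; lra].
      apply bLB_ok. exact H2. lra.
    + rewrite Q2R_1'. lra.
  - cbn [andb]. destruct (andb (test (S n)) (Nat.leb 3 (S n))).
    + pose proof (clamp_01 (bLB (S n) j (Mf (S n)))). lra.
    + rewrite Q2R_1'. lra.
Qed.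

Lemma PB_ok j n : Q2R (PBq j n) <= beta_partial_prod j n.
Proof.
  induction n.
  - simpl. rewrite Q2R_1'. lra.
  - rewrite PBq_S, bpp_S. eapply Rle_trans. apply rdown_le. rewrite Q2R_mult.
    pose proof (cfac_ok j n). pose proof (bpp_01 j n).
    apply Rle_trans with (beta_partial_prod j n * Q2R (cfac j n)).
    apply Rmult_le_compat_r; lra. apply Rmult_le_compat_l; lra.
Qed.

Lemma SP_ok n : sum_f_R0 alpha_prime_term n <= Q2R (SPq n).
Proof.
  induction n.
  - rewrite sf0. unfold alpha_prime_term. replace (isprime 0) with false by reflexivity.
    simpl. rewrite Q2R_0'. lra.
  - rewrite sfS. change (SPq (S n)) with
      (rup (SPq n + (if test (S n) then qmax0 (aUB (S n) (Mf (S n))) else 0))).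
    eapply Rle_trans; [|apply rup_ge]. rewrite Q2R_plus. apply Rplus_le_compat. exact IHn.
    unfold alpha_prime_term. destruct (isprime (S n)) eqn:Ei.
    + rewrite (test_sound _ Ei). pose proof (isprime_ge2 _ Ei).
      pose proof (qmax0_ok (aUB (S n) (Mf (S n)))). pose proof (aUB_ok (S n) H (Mf (S n))). lra.
    + destruct (test (S n)). apply qmax0_ok. rewrite Q2R_0'. lra.
Qed.

Lemma Q2R_2 : Q2R 2 = 2. Proof. unfold Q2R. simpl. field. Qed.

Lemma lamQ_ok k N : (S k <= N)%nat -> (2 <= N)%nat ->
  Q2R (lamQ (S k) N) <= lambda_term k.
Proof.
  intros HkN HN. unfold lamQ, lambda_term. eapply Rle_trans. apply rdown_le.
  assert (HN' : 2 <= INR N) by (apply INR_ge2; auto).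
  assert (Hj : 1 <= INR (S k)) by (rewrite S_INR; pose proof (pos_INR k); lra).
  assert (HjN : INR (S k) <= INR N) by (apply le_INR; auto).
  rewrite !Q2R_mult, Q2R_inv', Q2R_pQ by (rewrite Q2R_pQ; lra).
  rewrite Q2R_minus, Q2R_mult, Q2R_2.
  set (c := Q2R (qmax0 (PBq (S k) N * (1 - pQ (S k) / pQ N)))).
  assert (Hc : 0 <= c <= beta_prod (S k)).
  { split. apply qmax0_ok. apply qmax0_le. apply beta_prod_01.
    rewrite Q2R_mult, Q2R_minus, Q2R_1', Q2R_div', !Q2R_pQ by (rewrite Q2R_pQ; lra).
    eapply Rle_trans; [|apply (beta_prod_ge (S k) N); auto].
    apply Rmult_le_compat_r. 
    { assert (INR (S k) / INR N <= 1). { apply (Rmult_le_reg_r (INR N)). lra. unfold Rdiv. rewrite Rmult_assoc, Rinv_l by lra. lra. }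
      lra. }
    unfold Rdiv. apply PB_ok. }
  assert (H2 : 2 <= 2) by lra.
  pose proof (bLB_ok 2 (le_n 2) (S k) 30). replace (INR 2) with 2 in H by (simpl; ring).
  pose proof (twobeta (S k)).
  assert (0 < / INR (S k)) by (apply Rinv_0_lt_compat; lra).
  rewrite !Rmult_assoc. apply Rmult_le_compat_l. lra.
  apply Rle_trans with ((2 * beta (S k) 2 - 1) * c).
  apply Rmult_le_compat_r; lra. apply Rmult_le_compat_l; lra.
Qed.

Lemma LS_ok J N : (S J <= N)%nat -> (2 <= N)%nat ->
  Q2R (LSq (S J) N) <= sum_f_R0 lambda_term J.
Proof.
  intros HJ HN. induction J.
  - rewrite sf0. change (LSq 1 N) with (rdown (LSq 0 N + lamQ 1 N)).
    eapply Rle_trans. apply rdown_le. rewrite Q2R_plus. change (LSq 0 N) with 0%Q. rewrite Q2R_0'.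
    pose proof (lamQ_ok 0 N HJ HN). lra.
  - rewrite sfS. change (LSq (S (S J)) N) with (rdown (LSq (S J) N + lamQ (S (S J)) N)).
    eapply Rle_trans. apply rdown_le. rewrite Q2R_plus.
    pose proof (IHJ ltac:(lia)). pose proof (lamQ_ok (S J) N HJ HN). lra.
Qed.

Lemma apt_tail N : (1 <= N)%nat -> forall k,
  0 <= alpha_prime_term (S N + k) <= / (INR (S N + k) * INR (N + k)).
Proof.
  intros HN k. unfold alpha_prime_term.
  assert (H2 : (2 <= S N + k)%nat) by lia. pose proof (INR_ge2 _ H2).
  assert (E : INR (N + k) = INR (S N + k) - 1) by (replace (S N + k)%nat with (S (N + k)) by lia; rewrite S_INR; ring).
  assert (0 < / (INR (S N + k) * INR (N + k))) by (apply Rinv_0_lt_compat; rewrite E; nra).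
  destruct (isprime (S N + k)).
  - split. apply alpha_nonneg; lra.
    eapply Rle_trans. apply alpha_le_crude; lra. right. rewrite E. field. lra.
  - lra.
Qed.

Lemma ex_apt : ex_series alpha_prime_term.
Proof.
  apply (ex_series_incr_n alpha_prime_term 2).
  apply (ex_series_nonneg_le _ (fun k => / (INR (S 1 + k) * INR (1 + k)))).
  apply (apt_tail 1). lia. eexists. apply tele_series. lia.
Qed.

Lemma lt_bounds n : 0 <= lambda_term n <= (2/3) * (2/3) ^ n.
Proof.
  unfold lambda_term. pose proof (twobeta (S n)). pose proof (beta_prod_01 (S n)).
  assert (0 < / INR (S n) <= 1).
  { split. apply Rinv_0_lt_compat, lt_0_INR; lia.
    rewrite <- Rinv_1. apply Rinv_le_contravar. lra. rewrite S_INR. pose proof (pos_INR n); lra. }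
  simpl pow in H. split.
  - apply Rmult_le_pos. lra. apply Rmult_le_pos; lra.
  - assert (0 <= (2/3) * (2/3)^n) by (apply Rmult_le_pos; [lra|apply pow_le; lra]).
    apply Rle_trans with (1 * ((2 * beta (S n) 2 - 1) * 1)).
    apply Rmult_le_compat; try lra. apply Rmult_le_pos; lra.
    apply Rmult_le_compat_l; lra. lra.
Qed.

Lemma ex_lt : ex_series lambda_term.
Proof.
  apply (ex_series_nonneg_le _ (fun n => (2/3) * (2/3) ^ n)). apply lt_bounds.
  apply ex_series_geomc. rewrite Rabs_pos_eq; lra.
Qed.

Definition NN : nat := 1000.
Definition JJ : nat := 11.

Lemma final_check : Qle_bool (- (30 # 1000)) (final NN (S JJ)) = false.
Proof. vm_compute. reflexivity. Qed.

Theorem corollary5p5 :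
  (forall p : nat, isprime p = true -> ex_series (alpha_term (INR p))) /\
  (forall (j p : nat), (1 <= j)%nat -> isprime p = true ->
     ex_series (beta_term j (INR p))) /\
  (forall j : nat, (1 <= j)%nat -> ex_finite_lim_seq (beta_partial_prod j)) /\
  ex_series alpha_prime_term /\
  ex_series lambda_term /\
  lambda < - (30 / 1000).
Proof.
  split; [|split; [|split; [|split; [|split]]]].
  - intros p Hp. apply ex_alpha. apply INR_ge2, isprime_ge2, Hp.
  - intros j p _ Hp. apply ex_beta. apply INR_ge2, isprime_ge2, Hp.
  - intros j _. apply bpp_ex.
  - apply ex_apt.
  - apply ex_lt.
  - unfold lambda.
    assert (HN : (1 <= NN)%nat) by (unfold NN; lia).
    assert (HN2 : (2 <= NN)%nat) by (unfold NN; lia).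
    assert (Ha2 : alpha 2 <= Q2R (aUB 2 30)).
    { pose proof (aUB_ok 2 (le_n 2) 30). replace (INR 2) with 2 in H by (simpl; ring). exact H. }
    assert (Hsa : Series alpha_prime_term <= Q2R (SPq NN) + / INR NN).
    { rewrite (Series_incr_n _ (S NN)) by (lia || apply ex_apt). simpl pred.
      apply Rplus_le_compat. apply SP_ok.
      rewrite <- (is_series_unique _ _ (tele_series NN HN)).
      apply Series_le. apply apt_tail; auto. eexists. apply tele_series; auto. }
    assert (Hsl : Q2R (LSq (S JJ) NN) <= Series lambda_term).
    { rewrite (Series_incr_n _ (S JJ)) by (lia || apply ex_lt). simpl pred.
      pose proof (LS_ok JJ NN ltac:(unfold JJ, NN; lia) HN2).
      assert (0 <= Series (fun k => lambda_term (S JJ + k))).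
      { apply Series_nonneg. intros; apply lt_bounds.
        apply (ex_series_incr_n lambda_term (S JJ)). apply ex_lt. }
      lra. }
    assert (Hf : (final NN (S JJ) < - (30 # 1000))%Q).
    { apply Qnot_le_lt. intros H. apply Qle_bool_iff in H. rewrite final_check in H. discriminate. }
    apply Qlt_Rlt in Hf.
    unfold final in Hf. rewrite Q2R_minus, !Q2R_plus, Q2R_inv', Q2R_pQ in Hf.
    2: { rewrite Q2R_pQ. apply not_0_INR. unfold NN. lia. }
    replace (Q2R (- (30 # 1000))) with (- (30 / 1000)) in Hf by (unfold Q2R; simpl; field).
    lra.
Qed.
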